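(* Let $k$ be a commutative Noetherian ring and let $R$ be a reduced commutative $k$-algebra that is finitely generated as a $k$-module. Then $\mathrm{Aut}_{k\text{-alg}}(R)$ is a finite group.
   Context: Reduced means no nonzero nilpotent elements. *)

(* Defs.v *)
From HB Require Import structures.
From mathcomp Require Import all_boot all_order all_algebra.
Set Implicit Arguments. Unset Strict Implicit. Unset Printing Implicit Defensive.
Import GRing.Theory.
Local Open Scope ring_scope.

Definition is_ideal (k : comPzRingType) (I : k -> Prop) : Prop :=
  [/\ I 0,
      (forall x y, I x -> I y -> I (x + y)) &
      (forall a x, I x -> I (a * x))].

Definition fg_ideal (k : comPzRingType) (I : k -> Prop) : Prop :=
  exists s : seq k, forall x,
    I x <-> exists c : 'I_(size s) -> k, x = \sum_(i < size s) c i * s`_i.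

Definition noetherian (k : comPzRingType) : Prop :=
  forall I : k -> Prop, is_ideal I -> fg_ideal I.

Definition reduced (R : pzRingType) : Prop :=
  forall (x : R) (n : nat), x ^+ n = 0 -> x = 0.

Definition fg_module (k : pzRingType) (V : lmodType k) : Prop :=
  exists s : seq V, forall v : V,
    exists c : 'I_(size s) -> k, v = \sum_(i < size s) c i *: s`_i.

Definition kalg_aut (k : pzRingType) (R : algType k) (f : R -> R) : Prop :=
  [/\ (forall x y, f (x + y) = f x + f y),
      (forall (a : k) x, f (a *: x) = a *: f x),
      (forall x y, f (x * y) = f x * f y),
      f 1 = 1 &
      bijective f].

(* The group Aut_{k-alg}(R) is finite: there is a finite list of maps
   containing (up to extensional equality) every k-algebra automorphism. *)
Definition finite_kalg_aut (k : pzRingType) (R : algType k) : Prop :=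
  exists s : seq (R -> R), forall f : R -> R,
    kalg_aut f -> exists i : 'I_(size s), f =1 nth id s i.

(* Main.v *)
Require Import Defs.
From HB Require Import structures.
From mathcomp Require Import all_boot all_order all_algebra.
From Stdlib Require Import Classical ClassicalEpsilon.
From mathcomp Require Import zify.
Set Implicit Arguments. Unset Strict Implicit. Unset Printing Implicit Defensive.
Import GRing.Theory.
Local Open Scope ring_scope.

Lemma chain_mono T (C : nat -> T -> Prop) :
  (forall n x, C n x -> C n.+1 x) ->
  forall n m, (n <= m)%N -> forall x, C n x -> C m x.
Proof.
move=> H n m /subnK <-; elim: (m - n)%N => [//|d IH] x Hx.
rewrite addSn; exact/H/IH.
Qed.

Lemma acc_ideal (k : comPzRingType) : noetherian k ->
  forall C : nat -> k -> Prop, (forall n, is_ideal (C n)) ->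
  (forall n x, C n x -> C n.+1 x) -> exists N, forall m x, C m x -> C N x.
Proof.
move=> Hn C HI Hc.
pose U x := exists n, C n x.
have HU : is_ideal U.
  split.
  - by exists 0%N; case: (HI 0%N).
  - move=> x y [n Hx] [m Hy]; exists (maxn n m).
    case: (HI (maxn n m)) => _ Hadd _; apply: Hadd.
    + exact: (chain_mono Hc (leq_maxl n m)).
    + exact: (chain_mono Hc (leq_maxr n m)).
  - by move=> a x [n Hx]; exists n; case: (HI n) => _ _ Hm; exact: Hm.
have [s Hs] := Hn U HU.
have Hgen : forall i : 'I_(size s), U s`_i.
  move=> i; apply/Hs; exists (fun j => (j == i)%:R).
  rewrite (bigD1 i) //= eqxx mul1r big1 ?addr0 // => j /negbTE ->.
  by rewrite mul0r.
have [N HN] : exists N, forall i : 'I_(size s), C N s`_i.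
  suff: forall n, exists N, forall i : 'I_(size s), (i < n)%N -> C N s`_i.
    by move=> /(_ (size s)) [N HN]; exists N => i; apply HN.
  elim=> [|n [N HN]]; first by exists 0%N.
  case: (ltnP n (size s)) => Hn'.
  - have [M HM] := Hgen (Ordinal Hn').
    exists (maxn N M) => i; rewrite ltnS leq_eqVlt => /orP [/eqP Hi | Hi].
    + have -> : i = Ordinal Hn' by apply: val_inj.
      exact: (chain_mono Hc (leq_maxr N M)).
    + exact: (chain_mono Hc (leq_maxl N M) (HN i Hi)).
  - exists N => i _; apply: HN; exact: leq_trans (ltn_ord i) Hn'.
exists N => m x Hx.
have /Hs [c ->] : U x by exists m.
case: (HI N) => H0 Hadd Hmul.
apply: (big_ind (C N)) => // i _; exact: Hmul.
Qed.

Definition span (k : pzRingType) (V : lmodType k) (l : seq V) (v : V) :=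
  exists c : 'I_(size l) -> k, v = \sum_(i < size l) c i *: l`_i.

Definition subm (k : pzRingType) (V : lmodType k) (N : V -> Prop) :=
  [/\ N 0, forall x y, N x -> N y -> N (x + y) & forall a x, N x -> N (a *: x)].

Lemma subm_sub (k : pzRingType) (V : lmodType k) (N : V -> Prop) :
  subm N -> forall x y, N x -> N y -> N (x - y).
Proof.
case=> _ Had Hsc x y Hx Hy; apply: Had => //.
by rewrite -scaleN1r; apply: Hsc.
Qed.

Lemma subm_span (k : pzRingType) (V : lmodType k) (l : seq V) : subm (span l).
Proof.
split.
- by exists (fun _ => 0); rewrite big1 // => i _; rewrite scale0r.
- move=> x y [c ->] [c' ->]; exists (fun i => c i + c' i).
  by rewrite -big_split; apply: eq_bigr => i _; rewrite scalerDl.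
- move=> a x [c ->]; exists (fun i => a * c i).
  by rewrite scaler_sumr; apply: eq_bigr => i _; rewrite scalerA.
Qed.

Lemma acc_sub (k : comPzRingType) (V : lmodType k) : noetherian k ->
  forall (l : seq V) (C : nat -> V -> Prop), (forall n, subm (C n)) ->
  (forall n x, C n x -> C n.+1 x) -> (forall n x, C n x -> span l x) ->
  exists N, forall m x, C m x -> C N x.
Proof.
move=> Hnoeth; elim=> [|a l IH] C HS Hc Hsp.
  exists 0%N => m x /Hsp [c ->]; rewrite big_ord0; by case: (HS 0%N).
pose I n (c : k) := exists v, C n v /\ exists w, span l w /\ v = c *: a + w.
have HI : forall n, is_ideal (I n).
  move=> n; case: (HS n) => H0 Had Hsc; case: (subm_span l) => S0 SD SZ; split.
  - exists 0; split => //; exists 0; split; first exact: S0.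
    by rewrite scale0r addr0.
  - move=> x y [v [Cv [w [Sw Hv]]]] [v' [Cv' [w' [Sw' Hv']]]]; subst v v'.
    exists ((x *: a + w) + (y *: a + w')); split; first exact: Had.
    exists (w + w'); split; first exact: SD.
    by rewrite scalerDl addrACA.
  - move=> b x [v [Cv [w [Sw Hv]]]]; subst v.
    exists (b *: (x *: a + w)); split; first exact: Hsc.
    exists (b *: w); split; first exact: SZ.
    by rewrite scalerDr scalerA.
have HmI : forall n x, I n x -> I n.+1 x.
  by move=> n x [v [Cv H]]; exists v; split => //; exact: Hc.
have [N1 HN1] := acc_ideal Hnoeth HI HmI.
pose D n v := C n v /\ span l v.
have HD : forall n, subm (D n).
  move=> n; case: (HS n) => H0 Had Hsc; case: (subm_span l) => S0 SD SZ; split.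
  - by split.
  - by move=> x y [? ?] [? ?]; split; [apply: Had | apply: SD].
  - by move=> b x [? ?]; split; [apply: Hsc | apply: SZ].
have [N2 HN2] := IH D HD (fun n x H => conj (Hc _ _ H.1) H.2) (fun n x H => H.2).
exists (maxn N1 N2) => m v Cmv.
have [c Hcv] := Hsp _ _ Cmv.
rewrite big_ord_recl /= in Hcv.
set w := \sum_(i < size l) _ in Hcv.
have Sw : span l w by exists (fun i => c (lift ord0 i)).
have Im : I m (c ord0) by exists v; split => //; exists w.
have [v' [Cv' [w' [Sw' Hv']]]] := HN1 _ _ Im.
set M := maxn N1 N2.
have HCM : C M v' := chain_mono Hc (leq_maxl N1 N2) Cv'.
have Hd : D (maxn m M) (v - v').
  split.
  - apply: subm_sub (HS _) _ _ _ _.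
    + exact: (chain_mono Hc (leq_maxl m M)).
    + exact: (chain_mono Hc (leq_maxr m M)).
  - have -> : v - v' = w - w' by rewrite Hcv Hv' opprD addrACA subrr add0r.
    exact: subm_sub (subm_span l) _ _ Sw Sw'.
have [HC2 _] := HN2 _ _ Hd.
rewrite -(subrK v' v); case: (HS M) => _ Had _; apply: Had => //.
exact: (chain_mono Hc (leq_maxr N1 N2)).
Qed.

Definition rid (R : comNzRingType) (J : R -> Prop) :=
  [/\ J 0, forall x y, J x -> J y -> J (x + y) & forall a x, J x -> J (a * x)].

Lemma rid_subm (k : comPzRingType) (R : comAlgType k) (J : R -> Prop) :
  rid J -> subm J.
Proof.
case=> H0 Had Hm; split => // a x Hx.
by rewrite -[x]mul1r scalerAl; apply: Hm.
Qed.

Lemma noeth_ind (k : comPzRingType) (R : comAlgType k) :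
  noetherian k -> fg_module R ->
  forall P : (R -> Prop) -> Prop,
  (forall J, rid J -> (forall J', rid J' -> (forall x, J x -> J' x) ->
      (exists x, J' x /\ ~ J x) -> P J') -> P J) ->
  forall J, rid J -> P J.
Proof.
move=> Hn [s Hs] P HP J0 HJ0; apply: NNPP => HnP.
pose T := {J : R -> Prop | rid J /\ ~ P J}.
have step : forall t : T, exists t' : T, (forall x, sval t x -> sval t' x) /\
    exists x, sval t' x /\ ~ sval t x.
  move=> [J [HJ HnPJ]]; apply: NNPP => Hno; apply: (HnPJ).
  apply: HP => // J' HJ' Hsub Hstr; apply: NNPP => HnPJ'.
  by apply: Hno; exists (exist _ J' (conj HJ' HnPJ')).
pose gs t := constructive_indefinite_description _ (step t).
pose g t := proj1_sig (gs t).
have Hg : forall t, (forall x, sval t x -> sval (g t) x) /\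
    exists x, sval (g t) x /\ ~ sval t x := fun t => proj2_sig (gs t).
pose t0 : T := exist _ J0 (conj HJ0 HnP).
pose C n := sval (iter n g t0).
have [N HN] : exists N, forall m x, C m x -> C N x.
  apply: (@acc_sub k R Hn s C).
  - by move=> n; apply: rid_subm; case: (proj2_sig (iter n g t0)).
  - by move=> n x Hx; rewrite /C iterS; apply: (Hg _).1.
  - by move=> n x _; apply: Hs.
have [_ [x [Hx Hnx]]] := Hg (iter N g t0).
by apply: Hnx; apply: (HN N.+1).
Qed.

Section Rid.
Variable R : comNzRingType.
Implicit Types J K : R -> Prop.

Lemma rid_sub J : rid J -> forall x y, J x -> J y -> J (x - y).
Proof.
case=> _ Had Hm x y Hx Hy; apply: (Had) => //.
by rewrite -mulN1r; apply: (Hm).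
Qed.

Lemma rid_mulr J : rid J -> forall x a, J x -> J (x * a).
Proof. by case=> _ _ Hm x a Hx; rewrite mulrC; apply: (Hm). Qed.

Lemma rid_pow_add K : rid K -> forall x z n m,
  K (x ^+ n) -> K (z ^+ m) -> K ((x + z) ^+ (n + m)).
Proof.
move=> HK x z n m Hx Hz; rewrite exprDn.
case: (HK) => H0 Had Hm.
apply: (big_ind K) => // i _.
rewrite -mulr_natr; apply: rid_mulr => //.
case: (ltnP i m) => Him.
- have -> : x ^+ (n + m - i) = x ^+ (n + m - i - n) * x ^+ n.
    by rewrite -exprD subnK //; lia.
  by rewrite -mulrA; apply: (Hm); apply: rid_mulr.
- have -> : z ^+ i = z ^+ (i - m) * z ^+ m by rewrite -exprD subnK.
  by rewrite mulrA; apply: (Hm).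
Qed.

Definition radical J := forall x n, J (x ^+ n) -> J x.

Definition rad J (a : R) (x : R) := exists n y c, J y /\ x ^+ n = y + c * a.

Lemma rad_rid J a : rid J -> rid (rad J a).
Proof.
move=> HJ; case: (HJ) => H0 Had Hm.
pose K u := exists y c, J y /\ u = y + c * a.
have HK : rid K.
  split.
  - by exists 0, 0; rewrite mul0r addr0.
  - move=> u v [y [c [Hy ->]]] [y' [c' [Hy' ->]]].
    exists (y + y'), (c + c'); split; first exact: Had.
    by rewrite mulrDl addrACA.
  - move=> b u [y [c [Hy ->]]]; exists (b * y), (b * c); split; first exact: Hm.
    by rewrite mulrDr mulrA.
split.
- by exists 1%N, 0, 0; rewrite expr1 mul0r addr0.
- move=> x z [n [y [c [Hy Hx]]]] [m [y' [c' [Hy' Hz]]]].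
  have : K ((x + z) ^+ (n + m)).
    by apply: rid_pow_add => //; [exists y, c | exists y', c']; split.
  by move=> [y1 [c1 [Hy1 E]]]; exists (n + m)%N, y1, c1.
- move=> b x [n [y [c [Hy Hx]]]]; exists n, (b ^+ n * y), (b ^+ n * c).
  split; first exact: Hm.
  by rewrite exprMn Hx mulrDr mulrA.
Qed.

Lemma rad_incl J a x : J x -> rad J a x.
Proof. by move=> Hx; exists 1%N, x, 0; rewrite expr1 mul0r addr0. Qed.

Lemma rad_self J a : rid J -> rad J a a.
Proof. by case=> H0 _ _; exists 1%N, 0, 1; rewrite expr1 mul1r add0r. Qed.

Lemma rad_radical J a : radical (rad J a).
Proof.
by move=> x m [n [y [c [Hy E]]]]; exists (m * n)%N, y, c; rewrite exprM.
Qed.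

Lemma rad_cap J a b x : rid J -> radical J -> J (a * b) ->
  rad J a x -> rad J b x -> J x.
Proof.
move=> HJ Hrad Hab [n [y [c [Hy Hx]]]] [m [y' [c' [Hy' Hx']]]].
case: (HJ) => H0 Had Hm.
apply: (Hrad x (n + m)%N); rewrite exprD Hx Hx' mulrDl.
apply: (Had); first exact: (rid_mulr HJ _ Hy).
rewrite mulrDr; apply: (Had); first exact: (Hm _ _ Hy').
by rewrite mulrACA; apply: (Hm).
Qed.

Lemma domain_roots J : rid J -> ~ J 1 -> (forall a b, J (a * b) -> J a \/ J b) ->
  forall n (q : {poly R}), q \is monic -> size q = n.+1 ->
  exists L : seq R, forall r, J q.[r] -> exists2 l, l \in L & J (r - l).
Proof.
move=> HJ HJ1 Hpr; elim=> [|n IH] q Hm Hsz.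
  move/eqP: Hsz => /size_poly1P [c _ Hq].
  have Hc := monicP Hm; rewrite Hq lead_coefC in Hc.
  by exists [::] => r; rewrite Hq hornerC Hc => /HJ1.
case: (classic (exists r0, J q.[r0])) => [[r0 Hr0] | Hno]; last first.
  by exists [::] => r Hr; exfalso; apply: Hno; exists r.
have : root (q - q.[r0]%:P) r0 by rewrite /root hornerD hornerN hornerC subrr.
move/factor_theorem => [q' Hq'].
have Hsz' : size (q - q.[r0]%:P) = n.+2.
  by rewrite size_addl // size_opp Hsz (leq_ltn_trans (size_polyC_leq1 _)).
have Hlc : lead_coef (q - q.[r0]%:P) = 1.
  by rewrite lead_coefDl ?(monicP Hm) // size_opp Hsz (leq_ltn_trans (size_polyC_leq1 _)).
have q'0 : q' != 0 by apply: contra_eq_neq Hsz' => q'0; rewrite Hq' q'0 mul0r size_poly0.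
have Hm' : q' \is monic by apply/monicP; rewrite -(lead_coef_Mmonic q' (monicXsubC r0)) -Hq'.
have Hs' : size q' = n.+1.
  by move: Hsz'; rewrite Hq' size_Mmonic ?monicXsubC // size_XsubC addn2 => -[].
have [L HL] := IH q' Hm' Hs'.
exists (r0 :: L) => r Hr.
have : J (q'.[r] * (r - r0)).
  have := congr1 (fun p => p.[r]) Hq'; rewrite /= hornerM hornerXsubC hornerD hornerN hornerC => <-.
  by apply: rid_sub.
case/Hpr => [/HL [l Hl Hrl] | Hr0'].
- by exists l => //; rewrite inE Hl orbT.
- by exists r0 => //; rewrite inE eqxx.
Qed.

End Rid.

Lemma root_finite (k : comPzRingType) (R : comAlgType k) :
  noetherian k -> fg_module R -> forall q : {poly R}, q \is monic ->
  forall J, rid J -> radical J ->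
  exists L : seq R, forall r, J q.[r] -> exists2 l, l \in L & J (r - l).
Proof.
move=> Hn Hfg q Hm.
apply: (noeth_ind Hn Hfg (P := fun J => radical J -> exists L : seq R,
  forall r, J q.[r] -> exists2 l, l \in L & J (r - l))).
move=> J HJ IH Hrad.
case: (classic (J 1)) => [J1 | nJ1].
  exists [:: 0] => r _; exists 0; first by rewrite inE.
  by rewrite subr0 -[r]mul1r; apply: (rid_mulr HJ).
case: (classic (forall a b, J (a * b) -> J a \/ J b)) => [Hpr | Hnpr].
  apply: (domain_roots HJ nJ1 Hpr (n := (size q).-1) Hm).
  by rewrite prednK // size_poly_gt0 monic_neq0.
have [a [b [Hab [Ha Hb]]]] : exists a b, J (a * b) /\ ~ J a /\ ~ J b.
  apply: NNPP => H; apply: Hnpr => a b Hab.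
  case: (classic (J a)) => ?; [by left | right].
  by apply: NNPP => Hb; apply: H; exists a, b.
have [L1 HL1] := IH _ (rad_rid a HJ) (@rad_incl _ J a) (ex_intro _ a (conj (rad_self a HJ) Ha)) (@rad_radical _ J a).
have [L2 HL2] := IH _ (rad_rid b HJ) (@rad_incl _ J b) (ex_intro _ b (conj (rad_self b HJ) Hb)) (@rad_radical _ J b).
pose h (p : R * R) : R :=
  match excluded_middle_informative
    (exists r, J q.[r] /\ rad J a (r - p.1) /\ rad J b (r - p.2)) with
  | left H => proj1_sig (constructive_indefinite_description _ H)
  | right _ => 0 end.
exists [seq h p | p <- [seq (x, y) | x <- L1, y <- L2]] => r Hr.
have [l1 Hl1 Hr1] := HL1 r (rad_incl a Hr).
have [l2 Hl2 Hr2] := HL2 r (rad_incl b Hr).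
exists (h (l1, l2)); first by apply: map_f; apply: allpairs_f.
rewrite /h; case: excluded_middle_informative => [H|Hn']; last first.
  by exfalso; apply: Hn'; exists r.
case: constructive_indefinite_description => r' /= [Hr' [H1 H2]].
apply: (rad_cap HJ Hrad Hab).
- have -> : r - r' = (r - l1) - (r' - l1) by rewrite opprB addrA subrK.
  by apply: rid_sub (rad_rid a HJ) _ _ _ _.
- have -> : r - r' = (r - l2) - (r' - l2) by rewrite opprB addrA subrK.
  by apply: rid_sub (rad_rid b HJ) _ _ _ _.
Qed.

Lemma char_root (k : pzRingType) (R : comAlgType k) m (A : 'M[k]_m)
  (d : 'I_m -> k) (t : 'I_m -> R) (x : R) :
  (forall i, x * t i = \sum_l A i l *: t l) -> 1 = \sum_i d i *: t i ->
  (char_poly (map_mx (in_alg R) A)).[x] = 0.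
Proof.
move=> Hx Hd.
set A' := map_mx _ A.
pose B := x%:M - A'.
pose T := \col_i t i.
have HBT : B *m T = 0.
  apply/matrixP => i j; rewrite mulmxBl mul_scalar_mx !mxE.
  rewrite Hx; apply/eqP; rewrite subr_eq0; apply/eqP; apply: eq_bigr => l _.
  by rewrite /A' !mxE mulr_algl.
have HdT : \det B *: T = 0.
  by rewrite -mul_scalar_mx -mul_adj_mx -mulmxA HBT mulmx0.
have Ht : forall i, \det B * t i = 0.
  by move=> i; move/matrixP: HdT => /(_ i 0); rewrite !mxE.
have detB0 : \det B = 0.
  rewrite -(mulr1 (\det B)) Hd mulr_sumr big1 // => i _.
  by rewrite -scalerAr Ht scaler0.
rewrite -detB0 /char_poly -[_.[x]]/(horner_eval x _) -det_map_mx.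
congr (\det _); apply/matrixP => i j.
by rewrite !mxE /= horner_evalE !hornerE hornerMn hornerX.
Qed.

Lemma kalg_lin (k : pzRingType) (R : algType k) (f : R -> R) :
  kalg_aut f -> forall m (c : 'I_m -> k) (v : 'I_m -> R),
  f (\sum_(i < m) c i *: v i) = \sum_(i < m) c i *: f (v i).
Proof.
case=> Hadd Hsc _ _ _ m c v.
have f0 : f 0 = 0.
  by apply: (@addrI _ (f 0)); rewrite -Hadd !addr0.
rewrite (big_morph f Hadd f0); apply: eq_bigr => i _; exact: Hsc.
Qed.

Theorem mainTheorem17 (k : comPzRingType) (R : comAlgType k) :
  noetherian k -> reduced R -> fg_module R -> finite_kalg_aut R.
Proof.
move=> Hn Hred Hfg; have [s Hs] := Hfg.
pose m := size s.
pose coef (v : R) : 'I_m -> k := proj1_sig (constructive_indefinite_description _ (Hs v)).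
have coefE : forall v, v = \sum_(i < m) coef v i *: s`_i.
  by move=> v; rewrite /coef; case: constructive_indefinite_description.
pose A (j : 'I_m) : 'M[k]_m := \matrix_(i, l) coef (s`_j * s`_i) l.
pose q j := char_poly (map_mx (in_alg R) (A j)).
have J0 : rid (fun x : R => x = 0).
  split => //; [by move=> x y -> ->; rewrite addr0 | by move=> a x ->; rewrite mulr0].
have J0r : radical (fun x : R => x = 0) by move=> x n /Hred.
have HL : forall j, exists L : seq R, forall r, (q j).[r] = 0 -> r \in L.
  move=> j; have [L HL] := root_finite Hn Hfg (char_poly_monic _) J0 J0r (q := q j).
  by exists L => r /HL [l Hl /eqP]; rewrite subr_eq0 => /eqP ->.
pose Lf j := proj1_sig (constructive_indefinite_description _ (HL j)).
have HLf : forall j r, (q j).[r] = 0 -> r \in Lf j.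
  by move=> j; rewrite /Lf; case: constructive_indefinite_description.
pose L := flatten [seq Lf j | j <- enum 'I_m].
have HLL : forall j r, (q j).[r] = 0 -> r \in L.
  by move=> j r /HLf Hr; apply/flatten_mapP; exists j => //; rewrite mem_enum.
pose F := {ffun 'I_m -> 'I_(size L)}.
pose mk (g : F) := fun v : R => \sum_(i < m) coef v i *: nth 0 L (g i).
exists [seq mk g | g <- enum F] => f Hf.
have Hin : forall i : 'I_m, f s`_i \in L.
  move=> j; apply: (HLL j).
  apply: (@char_root k R m (A j) (coef 1) (fun i => f s`_i)).
  - move=> i; case: (Hf) => _ _ Hmul _ _.
    by rewrite -Hmul {1}(coefE (s`_j * s`_i)) (kalg_lin Hf); apply: eq_bigr => l _; rewrite mxE.
  - by case: (Hf) => _ _ _ H1 _; rewrite -{1}H1 {1}(coefE 1) (kalg_lin Hf).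
have Hidx : forall i : 'I_m, leq (index (f s`_i) L).+1 (size L) by move=> i; rewrite index_mem Hin.
pose g : F := [ffun i => Ordinal (Hidx i)].
have Hgi : (index g (enum F) < size [seq mk g | g <- enum F])%N.
  by rewrite size_map index_mem mem_enum.
exists (Ordinal Hgi) => v /=.
rewrite (nth_map g) ?index_mem ?mem_enum // nth_index ?mem_enum //.
rewrite /mk {1}(coefE v) (kalg_lin Hf); apply: eq_bigr => i _.
by rewrite ffunE /= nth_index.
Qed.
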